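(* Let $q$ be a prime power, $M\geq 2$ an integer, and let $f$ be a SCIM polynomial over $\mathbb{F}_{q^2}$ of odd degree $d\geq 1$. Let $C_f\in \mathrm{U}(d,\mathbb{F}_{q^2})$ be a matrix with characteristic polynomial $f$. If there exists $\alpha\in \mathrm{U}(d,\mathbb{F}_{q^2})$ with $\alpha^M=C_f$, then $f(x^M)$ has a SCIM factor of degree $d$.
   Context: For $a\in\mathbb{F}_{q^2}$ write $\bar a=a^q$, extended coefficientwise to matrices and polynomials. Let $\Lambda_n$ be the $n\times n$ matrix with $1$'s on the antidiagonal and $0$ elsewhere; the unitary group is $\mathrm{U}(n,\mathbb{F}_{q^2})=\{A\in \mathrm{GL}(n,\mathbb{F}_{q^2}) : A\Lambda_n\bar A^{t}=\Lambda_n\}$. For a monic polynomial $f$ of degree $d$ with $f(0)\neq 0$ define $\widetilde{f}(t)=\overline{f(0)}^{-1}t^d\bar f(t^{-1})$. A SCIM polynomial is a monic polynomial $f\in\mathbb{F}_{q^2}[t]$ with $f(0)\neq0$, irreducible over $\mathbb{F}_{q^2}$, with $\widetilde f=f$. *)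

(* Defs.v *)
From HB Require Import structures.
From mathcomp Require Import all_boot all_order all_algebra all_field.
Set Implicit Arguments. Unset Strict Implicit. Unset Printing Implicit Defensive.
Import GRing.Theory.
Local Open Scope ring_scope.

(* F plays the role of F_{q^2}; the conjugation is a |-> a^q. *)
Definition qconj (F : finFieldType) (q : nat) (a : F) : F := a ^+ q.

Definition antidiag (F : finFieldType) (n : nat) : 'M[F]_n :=
  \matrix_(i < n, j < n) (if (i + j == n.-1)%N then 1 else 0).

Definition unitary (F : finFieldType) (q n : nat) (A : 'M[F]_n) : Prop :=
  A \in unitmx /\
  A *m antidiag F n *m (map_mx (qconj q) A)^T = antidiag F n.

(* tilde f (t) = (bar f(0))^{-1} t^d bar f(t^{-1}), d = deg f *)
Definition ptilde (F : finFieldType) (q : nat) (f : {poly F}) : {poly F} :=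
  (qconj q (f`_0))^-1 *:
    \poly_(i < size f) qconj q (f`_((size f).-1 - i)).

Definition SCIM (F : finFieldType) (q : nat) (f : {poly F}) : Prop :=
  [/\ f \is monic, f`_0 != 0, irreducible_poly f & ptilde q f = f].

(* Main.v *)
Require Import Defs.
From HB Require Import structures.
From mathcomp Require Import all_boot all_order all_algebra all_field.
From mathcomp Require Import zify all_fingroup.
Import GRing.Theory.
Local Open Scope ring_scope.

Section Conj.
Variable (F : finFieldType) (q : nat).
Hypothesis Hadd : forall a b : F, (a + b) ^+ q = a ^+ q + b ^+ q.

Definition cj (a : F) : F := let _ := Hadd in a ^+ q.

Lemma cj_zmod : zmod_morphism cj.
Proof.
move=> x y; rewrite /cj.
have := Hadd (x - y) y; rewrite subrK => ->; by rewrite addrK.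
Qed.
Lemma cj_mon : monoid_morphism cj.
Proof. by split; [rewrite /cj expr1n | move=> x y; rewrite /cj exprMn]. Qed.
HB.instance Definition _ := GRing.isZmodMorphism.Build F F cj cj_zmod.
HB.instance Definition _ := GRing.isMonoidMorphism.Build F F cj cj_mon.
End Conj.

Lemma char_add (F : finFieldType) p k q : prime p -> q = (p ^ k)%N -> #|F| = (q ^ 2)%N ->
  forall a b : F, (a + b) ^+ q = a ^+ q + b ^+ q.
Proof.
move=> pp -> cF a b.
have pc : p \in [pchar F].
  apply: (@card_finPcharP F p (k * 2)) => //; by rewrite cF expnM.
apply: exprDn_pchar.
rewrite pnatX; case: (k) => [|k'] //=; rewrite ?orbT // orbF.
by rewrite pnatE.
Qed.
Lemma horner_char_poly (R : fieldType) n (A : 'M[R]_n) (x : R) :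
  (char_poly A).[x] = \det (x%:M - A).
Proof.
rewrite /char_poly -horner_evalE -det_map_mx; congr (\det _).
by apply/matrixP => i j; rewrite !mxE /= horner_evalE hornerD hornerN hornerC hornerMn hornerX.
Qed.

Lemma rev_char (F : fieldType) n (A : 'M[F]_n) :
  \poly_(i < n.+1) (char_poly A)`_(n - i) = \det (1%:M - 'X *: map_mx polyC A).
Proof.
set P := char_poly A.
pose phi := (@tofrac _ \o (@polyC F)).
pose y : {fraction {poly F}} := tofrac 'X.
have y0 : y != 0 by rewrite tofrac_eq0 polyX_eq0.
apply/eqP; rewrite -tofrac_eq; apply/eqP.
rewrite -det_map_mx.
pose A' := map_mx phi A.
have -> : map_mx (@tofrac _) (1%:M - 'X *: map_mx polyC A) = 1%:M - y *: A'.
  by apply/matrixP => i j; rewrite !mxE /= rmorphB rmorphM /= rmorph_nat.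
have -> : (1%:M - y *: A') = y *: (y^-1%:M - A').
  by rewrite scalerBr scale_scalar_mx mulfV.
rewrite detZ -horner_char_poly -map_char_poly.
rewrite (horner_coef_wide _ (n:=n.+1)); last by rewrite size_map_poly size_char_poly.
rewrite mulr_sumr poly_def rmorph_sum /=.
rewrite (reindex_inj rev_ord_inj) /=; apply: eq_bigr => i _.
rewrite subSS subKn; last by rewrite -ltnS.
rewrite -mul_polyC tofracM tofracXn coef_map /=.
rewrite mulrCA; congr (_ * _).
rewrite exprVn exprB ?unitfE //; last by rewrite -ltnS.
Qed.
Lemma antidiag_det (F : finFieldType) n : \det (antidiag F n) != 0.
Proof.
have -> : antidiag F n = perm_mx (perm (@rev_ord_inj n)).
  apply/matrixP => i j; rewrite !mxE permE /=.
  have := ltn_ord i; have := ltn_ord j.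
  case: eqP => [e|e]; case: eqP => [e'|e'] // hj hi; exfalso.
    by apply: e'; apply/val_inj => /=; lia.
  by apply: e; move: e' => /(congr1 val) /=; lia.
by rewrite det_perm signr_eq0.
Qed.
Lemma KL (F : finFieldType) (f g : {poly F}) (M n : nat) :
  irreducible_poly f -> size f = n.+1 -> g %| f \Po 'X^M -> (1 < size g)%N ->
  (n.+1 <= size g)%N.
Proof.
move=> irf sf gd sg.
have g0 : g != 0 by rewrite -size_poly_gt0 ltnW.
have key : forall P : {poly F}, (size P <= n)%N -> g %| P \Po 'X^M -> P = 0.
  move=> P sP gP; apply/eqP; apply/negPn/negP => P0.
  have cop : coprimep f P.
    rewrite irreducible_poly_coprime //; apply/negP => /dvdp_leq.
    move=> /(_ P0); rewrite sf => H; move: sP; by rewrite leqNgt H.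
  case/Bezout_coprimepP: cop => u ue.
  set e := u.1 * f + u.2 * P in ue.
  have se : size e = 1%N by rewrite (eqp_size ue) size_poly1.
  have eC : e = (e`_0)%:P by apply: size1_polyC; rewrite se.
  have e00 : e`_0 != 0.
    apply/eqP => e00; move: se; by rewrite eC e00 size_poly0.
  have : g %| e \Po 'X^M.
    rewrite /e comp_polyD !comp_polyM; apply: dvdp_add; first exact: dvdp_mull.
    exact: dvdp_mull.
  rewrite eC comp_polyC => /dvdp_leq; rewrite polyC_eq0 e00 size_polyC e00 => /(_ isT).
  by rewrite leqNgt sg.
pose m := (size g).-1.
pose phi (u : 'rV[F]_n) : 'rV[F]_m := poly_rV ((rVpoly u \Po 'X^M) %% g).
have inj : injective phi.
  move=> u v; rewrite /phi => /eqP; rewrite -subr_eq0 -linearB /= -modpN -modpD -comp_polyB -linearB /=.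
  set r := _ %% g => /eqP r0.
  have sr : (size r <= m)%N by rewrite /m -ltnS prednK ?ltn_modp // ltnW.
  have : r = 0 by rewrite -(poly_rV_K sr) r0 linear0.
  rewrite /r => /modp_eq0P /key.
  move/(_ (size_poly _ _)) => /(congr1 (@poly_rV F n)).
  rewrite rVpolyK linear0 => /eqP; rewrite subr_eq0 => /eqP //.
have := @leq_card _ _ phi inj; rewrite !card_mx !mul1n leq_exp2l.
  by rewrite /m -ltnS prednK // ltnW.
exact: card_finNzRing_gt1.
Qed.

Lemma ptilde_char (F : finFieldType) q (H : forall a b : F, (a + b) ^+ q = a ^+ q + b ^+ q)
  n (A : 'M[F]_n) :
  A \in unitmx -> A *m antidiag F n *m (map_mx (qconj q) A)^T = antidiag F n ->
  ptilde q (char_poly A) = char_poly A.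
Proof.
move=> Au E.
set h := char_poly A.
pose c := cj F q H.
set L := antidiag F n.
have dA : \det A != 0 by rewrite -unitfE -unitmxE.
set B := map_mx (qconj q) A in E.
have EB : B = map_mx c A by [].
have hb : map_poly c h = char_poly B by rewrite EB map_char_poly.
pose D := \det (1%:M - 'X *: map_mx polyC B).
have key : D * (\det A)%:P = ((-1) ^+ n) *: h.
  pose Ap := map_mx polyC A; pose Lp := map_mx polyC L; pose Bp := map_mx polyC B.
  have Ep : Ap *m Lp *m Bp^T = Lp by rewrite /Ap /Lp /Bp map_trmx -!map_mxM E.
  have E2 : Ap *m Lp *m (1%:M - 'X *: Bp^T) = ((-1) *: char_poly_mx A) *m Lp.
    rewrite scaleN1r mulmxBr mulmx1 -scalemxAr Ep /char_poly_mx opprB mulmxBl mul_scalar_mx.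
    by [].
  have := congr1 determinant E2.
  rewrite !det_mulmx detZ /Ap /Lp !det_map_mx.
  have -> : 1%:M - 'X *: Bp^T = (1%:M - 'X *: Bp)^T by apply/matrixP => i j; rewrite !mxE eq_sym.
  rewrite det_tr -/D -/h.
  move=> e; apply: (@mulIf _ (\det L)%:P); first by rewrite polyC_eq0 antidiag_det.
  by rewrite (mulrC D) mulrAC e -mul_polyC rmorphXn /= rmorphN /= rmorph1.
have R : \poly_(i < n.+1) (map_poly c h)`_(n - i) = D by rewrite hb rev_char.
have hn : h`_n = 1.
  by move: (char_poly_monic A); rewrite monicE lead_coefE size_char_poly => /eqP.
have c0 : (map_poly c h)`_0 * \det A = (-1) ^+ n.
  have := congr1 (fun p : {poly F} => p`_n) key.
  by rewrite /= coefMC -R coef_poly ltnSn subnn coefZ hn mulr1.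
have h0 : h`_0 != 0 by rewrite char_poly_det mulf_eq0 signr_eq0 (negbTE dA).
have ch0 : (map_poly c h)`_0 != 0.
  by rewrite coef_map /= /c /cj expf_eq0 (negbTE h0) andbF.
have RD : D = (map_poly c h)`_0 *: h.
  apply: (@mulIf _ (\det A)%:P); first by rewrite polyC_eq0.
  by rewrite key -c0 -!mul_polyC polyCM mulrAC.
have sh : size h = n.+1 := size_char_poly A.
rewrite /ptilde sh.
have -> : \poly_(i < n.+1) qconj q h`_(n.+1.-1 - i) = D.
  by rewrite -R; apply: eq_poly => i _; rewrite coef_map.
have -> : qconj q h`_0 = (map_poly c h)`_0 by rewrite coef_map.
by rewrite RD scalerA mulVf ?scale1r.
Qed.

Lemma horner_mx_comp (R : comNzRingType) n (A : 'M[R]_n.+1) (p r : {poly R}) :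
  horner_mx A (p \Po r) = horner_mx (horner_mx A r) p.
Proof.
rewrite comp_polyE.
have -> : horner_mx (horner_mx A r) p = horner_mx (horner_mx A r) (\sum_(i < size p) p`_i *: 'X^i) by rewrite -poly_def coefK.
rewrite !linear_sum /=; apply: eq_bigr => i _.
by rewrite !linearZ /= !rmorphXn /= horner_mx_X.
Qed.

Theorem lemma4p1 (F : finFieldType) (p k q : nat) (M d : nat)
  (f : {poly F}) (Cf : 'M[F]_d) :
  prime p -> (0 < k)%N -> q = (p ^ k)%N -> #|F| = (q ^ 2)%N ->
  (2 <= M)%N ->
  SCIM q f -> (size f).-1 = d -> odd d ->
  unitary q Cf -> char_poly Cf = f ->
  (exists alpha : 'M[F]_d, unitary q alpha /\ alpha ^+ M = Cf) ->
  exists g : {poly F}, [/\ SCIM q g, (size g).-1 = d & g %| f \Po 'X^M].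
Proof.
move=> pp k0 Hq cF M2 [fm f0 irf ft] sfd od _ CP [alpha [[aU aE] aM]].
have H := @char_add F p k q pp Hq cF.
move: Cf alpha sfd od CP aU aE aM; case: d => [//|n] Cf alpha sfd _ CP aU aE aM.
have sf : size f = n.+2 by rewrite -sfd prednK // size_poly_gt0 monic_neq0.
have hm : horner_mx alpha (f \Po 'X^M) = 0.
  by rewrite horner_mx_comp rmorphXn /= horner_mx_X aM -CP Cayley_Hamilton.
have md : mxminpoly alpha %| f \Po 'X^M := mxminpoly_min hm.
have KLq : forall g, g %| f \Po 'X^M -> (1 < size g)%N -> (n.+2 <= size g)%N.
  by move=> g gd sg; apply: (@KL _ f g M n.+1 irf sf gd sg).
have ms : (1 < size (mxminpoly alpha))%N by rewrite size_mxminpoly ltnS mxminpoly_nonconstant.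
have mh := mxminpoly_dvd_char alpha.
have hmon := char_poly_monic alpha.
set h := char_poly alpha in mh hmon *.
have sh : size h = n.+2 := size_char_poly alpha.
have hn0 : h != 0 by apply: monic_neq0.
have meq : mxminpoly alpha %= h.
  by rewrite -dvdp_size_eqp // sh eqn_leq KLq // andbT -sh dvdp_leq.
have hd : h %| f \Po 'X^M by rewrite -(eqp_dvdl _ meq).
exists h; split => //; last by rewrite sh.
split => //.
- have dA : \det alpha != 0 by rewrite -unitfE -unitmxE.
  by rewrite char_poly_det mulf_eq0 signr_eq0 (negbTE dA).
- split; first by rewrite sh.
  move=> g sg gh.
  have g0 : g != 0 by apply: contraNneq hn0 => g0; move: gh; rewrite g0 dvd0p.
  have sg1 : (1 < size g)%N.
    by move: g0 sg; rewrite -size_poly_gt0; case: (size g) => [|[|]].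
  rewrite -dvdp_size_eqp // eqn_leq (dvdp_leq hn0 gh) sh KLq //.
  exact: dvdp_trans gh hd.
- exact: (@ptilde_char F q H _ alpha aU aE).
Qed.
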